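(* Let $N\ge 2$ and $m$ be integers and let $v$ be a nonzero complex number with $v^N=-1$. For integers $n$ put $\{n\}=v^n-v^{-n}$, $A(j,k)=\{j-k\}\{j+k\}$, $S(k,l)=\prod_{k\le n\le l}\{n\}$, and for a finite family ${\prod'_{i\in I}}a_i=\sum_{i\in I}\prod_{r\in I\setminus\{i\}}a_r$. Define $$D(j,l)=(v^j+v^{-j})\Big(\prod_{k=1}^lA(j,k)+2\{j\}^2{\prod_{1\le k\le l}}'A(j,k)\Big)+\frac{mj}{2}\{j\}\prod_{k=1}^lA(j,k).$$ Then for $1\le j\le N-1$ and $0\le l\le N-1$, $$D(N-j,l)+D(j,l)=\frac{mN}{2}S(j-l,j+l).$$ *)

(* Defs.v *)
From mathcomp Require Import all_boot all_order all_algebra.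
Set Implicit Arguments. Unset Strict Implicit. Unset Printing Implicit Defensive.
Import Order.TTheory GRing.Theory Num.Theory.
Local Open Scope ring_scope.

Section Defs.
Variable C : numClosedFieldType.
Variable v : C.

Definition qbr (n : int) : C := v ^ n - v ^ (- n).

Definition qA (j k : int) : C := qbr (j - k) * qbr (j + k).

(* S(k,l) = prod_{k <= n <= l} {n}  (empty product = 1 if l < k) *)
Definition qS (k l : int) : C :=
  let len : nat := absz (l - k + 1)%R in
  \prod_(i < len | (k + i%:Z <= l)%R) qbr (k + i%:Z).

Definition qD (m : int) (j : int) (l : nat) : C :=
  (v ^ j + v ^ (- j)) *
    (\prod_(1 <= k < l.+1) qA j k%:Z
     + 2 * qbr j ^+ 2 *
       \sum_(1 <= i < l.+1) \prod_(1 <= k < l.+1 | k != i) qA j k%:Z)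
  + (m * j)%:~R / 2 * qbr j * \prod_(1 <= k < l.+1) qA j k%:Z.
End Defs.

(* Main.v *)
Require Import Defs.
From mathcomp Require Import all_boot all_order all_algebra.
From mathcomp Require Import ring zify.
From Stdlib Require Import FunctionalExtensionality.
Import Order.TTheory GRing.Theory Num.Theory.
Local Open Scope ring_scope.

Section H.
Variables (C : numClosedFieldType) (N : nat) (v : C).
Hypotheses (hv0 : v != 0) (hvN : v ^+ N = -1).

Lemma vN_neg : v ^ (- (N%:Z)) = -1.
Proof. by rewrite -exprnN hvN invrN invr1. Qed.

Lemma pow_Nn (n : int) : v ^ (N%:Z - n) = - v ^ (- n).
Proof. by rewrite expfzDr // -exprnP hvN mulN1r. Qed.

Lemma pow_Nn' (n : int) : v ^ (- (N%:Z - n)) = - v ^ n.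
Proof. by rewrite opprB addrC expfzDr // vN_neg mulN1r. Qed.

Lemma qbrN (n : int) : qbr v (N%:Z - n) = qbr v n.
Proof. rewrite /qbr pow_Nn pow_Nn'; ring. Qed.

Lemma qAN (j k : int) : qA v (N%:Z - j) k = qA v j k.
Proof.
rewrite /qA.
have -> : N%:Z - j - k = N%:Z - (j + k) by ring.
have -> : N%:Z - j + k = N%:Z - (j - k) by ring.
by rewrite !qbrN mulrC.
Qed.

Lemma Sexp (j : int) (l : nat) :
  \prod_(i < (2 * l + 1)%N) qbr v (j - l%:Z + i%:Z)
  = qbr v j * \prod_(1 <= k < l.+1) qA v j k%:Z.
Proof.
elim: l => [|l IH].
  by rewrite big_ord_recl big_ord0 big_geq // !mulr1 subr0 addr0.
have -> : (2 * l.+1 + 1 = (2 * l + 1).+2)%N by rewrite mulnS; lia.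
rewrite big_ord_recl big_ord_recr /=.
rewrite big_nat_recr //=.
have E : forall i : 'I_(2 * l + 1),
  qbr v (j - (l.+1)%:Z + (bump 0 i)%:Z) = qbr v (j - l%:Z + i%:Z).
  move=> i; congr qbr; rewrite /bump /= add1n.
  have -> : (Posz (nat_of_ord i).+1) = (nat_of_ord i)%:Z + 1 by rewrite -addn1 PoszD.
  have -> : (Posz l.+1) = l%:Z + 1 by rewrite -addn1 PoszD.
  ring.
rewrite (eq_bigr _ (fun i _ => E i)) IH /qA.
have -> : j - (l.+1)%:Z + 0%N%:Z = j - (l.+1)%:Z by rewrite addr0.
have -> : j - (l.+1)%:Z + (bump 0 (2 * l + 1))%:Z = j + (l.+1)%:Z.
  rewrite /bump /= add1n.
  have -> : (Posz (2 * l + 1).+1) = 2 * l%:Z + 2 by lia.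
  have -> : (Posz l.+1) = l%:Z + 1 by rewrite -addn1 PoszD.
  ring.
ring.
Qed.
End H.

Theorem lemma2p5 (C : numClosedFieldType) (N : nat) (m : int) (v : C)
  (hN : (2 <= N)%N) (hv0 : v != 0) (hvN : v ^+ N = -1)
  (j l : nat) (hj1 : (1 <= j)%N) (hj2 : (j <= N - 1)%N) (hl : (l <= N - 1)%N) :
  qD v m (N%:Z - j%:Z) l + qD v m j%:Z l
  = (m * N%:Z)%:~R / 2 * qS v (j%:Z - l%:Z) (j%:Z + l%:Z).
Proof.
rewrite /qS /=.
have -> : absz (j%:Z + l%:Z - (j%:Z - l%:Z) + 1) = (2 * l + 1)%N.
  have -> : j%:Z + l%:Z - (j%:Z - l%:Z) + 1 = (2 * l + 1)%N%:Z.
    rewrite PoszD PoszM; ring.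
  by [].
rewrite (eq_bigl (fun _ => true)); last first.
  move=> i /=; apply/idP.
  have := ltn_ord i => hi.
  rewrite -subr_ge0.
  have -> : j%:Z + l%:Z - (j%:Z - l%:Z + i%:Z) = (2 * l)%N%:Z - i%:Z.
    rewrite PoszM; ring.
  rewrite subr_ge0 lez_nat; lia.
rewrite Sexp // /qD.
have HA : qA v (N%:Z - j%:Z) = qA v j%:Z.
  by apply: functional_extensionality => k; rewrite qAN.
rewrite HA.
rewrite qbrN // pow_Nn // pow_Nn' //.
rewrite !intrM intrB.
ring.
Qed.
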